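(* For every ordinal $\alpha$ there exists a peripherally Hausdorff space $X$ with $\mathrm{rank}_{T_2}(X)=\alpha$.
   Context: For a topological space $X$ and $x\in X$, let $[x]:=\bigcap\{\overline{U}:U \text{ an open neighbourhood of } x\}$. Define $\alpha$-Hausdorff spaces by transfinite recursion: a space is $0$-Hausdorff if it is Hausdorff; for an ordinal $\alpha>0$, a $T_1$ space $X$ is $\alpha$-Hausdorff if for every $x\in X$ the subspace $[x]$ (with topology inherited from $X$) is $\beta_x$-Hausdorff for some ordinal $\beta_x<\alpha$. A space is peripherally Hausdorff if it is $\alpha$-Hausdorff for some ordinal $\alpha$, and then $\mathrm{rank}_{T_2}(X):=\min\{\alpha: X \text{ is } \alpha\text{-Hausdorff}\}$. *)

(* Defs.v *)
From HB Require Import structures.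
From mathcomp Require Import all_boot all_order all_algebra.
From mathcomp Require Import all_classical all_reals all_analysis.
Set Implicit Arguments. Unset Strict Implicit. Unset Printing Implicit Defensive.
Local Open Scope classical_set_scope.

Definition pclosure {T : topologicalType} (x : T) : set T :=
  [set y | forall U : set T, open_nbhs x U -> closure U y].

(** The subspace [x] with the subspace topology (set_type carries the
    initial topology of the inclusion). *)
Definition pclosure_space {T : topologicalType} (x : T) : topologicalType :=
  set_type (pclosure x).

(** Ordinals are represented by elements of a well-ordered type:
    [R] is a strict well-order on [W]. *)
Definition strict_well_order {W : Type} (R : W -> W -> Prop) : Prop :=
  well_founded R /\
  (forall a b c, R a b -> R b c -> R a c) /\
  (forall a b, R a b \/ a = b \/ R b a).

(** alpha-Hausdorff, by (well-founded) transfinite recursion on R.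
    The ordinal w is 0 iff it has no R-predecessor. *)
Inductive alpha_hausdorff {W : Type} (R : W -> W -> Prop) :
    W -> topologicalType -> Prop :=
  | ah_zero (w : W) (T : topologicalType) :
      (forall v, ~ R v w) -> hausdorff_space T -> alpha_hausdorff R w T
  | ah_succ (w : W) (T : topologicalType) :
      (exists v, R v w) -> accessible_space T ->
      (forall x : T, exists2 v, R v w & alpha_hausdorff R v (pclosure_space x)) ->
      alpha_hausdorff R w T.

Definition peripherally_hausdorff (T : topologicalType) : Prop :=
  exists (W : Type) (R : W -> W -> Prop) (w : W),
    strict_well_order R /\ alpha_hausdorff R w T.

Definition rankT2_eq {W : Type} (R : W -> W -> Prop) (T : topologicalType) (w : W) : Prop :=
  alpha_hausdorff R w T /\ (forall v, R v w -> ~ alpha_hausdorff R v T).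

(* Main.v *)
Require Import Defs.
From HB Require Import structures.
From mathcomp Require Import all_boot all_order all_algebra.
From mathcomp Require Import all_classical all_reals all_analysis.
Set Implicit Arguments. Unset Strict Implicit. Unset Printing Implicit Defensive.
Local Open Scope classical_set_scope.

Lemma set_type_openE (T : topologicalType) (A : set T) (S : set (set_type A)) :
  open S <-> exists O : set T, open O /\ S = set_val @^-1` O.
Proof.
split.
- move=> [P oP <-]. by exists P.
- move=> [P [oP ->]]. by exists P.
Qed.

Definition sepH {Z : topologicalType} (A : set Z) := forall x y, A x -> A y -> x <> y ->
  exists U V, [/\ open U, open V, U x, V y & forall z, A z -> U z -> V z -> False].
Definition sepT1 {Z : topologicalType} (A : set Z) := forall x y, A x -> A y -> x <> y ->
  exists U, [/\ open U, U x & ~ U y].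
Definition pcl {Z : topologicalType} (A : set Z) (x : Z) : set Z :=
  [set y | A y /\ forall U V, open U -> open V -> U x -> V y ->
      exists z, [/\ A z, U z & V z]].

Inductive AH {W : Type} (R : W -> W -> Prop) {Z : topologicalType} : W -> set Z -> Prop :=
| AH0 w A : (forall v, ~ R v w) -> sepH A -> AH R w A
| AHS w A : (exists v, R v w) -> sepT1 A ->
    (forall x, A x -> exists2 v, R v w & AH R v (pcl A x)) -> AH R w A.

Definition emb {T Z : topologicalType} (e : T -> Z) :=
  injective e /\ forall S : set T, open S <-> exists O, open O /\ S = e @^-1` O.

Lemma emb_sub {T Z : topologicalType} (e : T -> Z) (A : set T) :
  emb e -> emb (fun a : set_type A => e (set_val a)).
Proof.
move=> [ie oe]; split.
  move=> a b /ie h; exact: val_inj.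
move=> S; rewrite set_type_openE; split.
  move=> [P [/oe [Q1 [oO ->]] ->]]; by exists Q1.
move=> [Q1 [oO ->]]; exists (e @^-1` Q1); split => //.
by apply/oe; exists Q1.
Qed.

Lemma range_sub {T Z : Type} (e : T -> Z) (A : set T) :
  range (fun a : set_type A => e (set_val a)) = e @` A.
Proof.
apply/seteqP; split.
  move=> z [a _ <-]; exists (set_val a) => //; exact: set_mem (valP a).
move=> z [x Ax <-]; by exists (exist _ x (mem_set Ax)).
Qed.

Lemma hausdorff_emb {T Z : topologicalType} (e : T -> Z) :
  emb e -> (hausdorff_space T <-> sepH (range e)).
Proof.
move=> [ie oe]; rewrite open_hausdorff; split.
  move=> h _ _ [x _ <-] [y _ <-] nxy.
  have /h : x != y by apply/eqP => exy; apply: nxy; rewrite exy.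
  move=> [[P Q]] /=; rewrite !inE => -[Px Qy] [/oe [U [oU eP]] /oe [V [oV eQ]] PQ].
  exists U, V; split => //.
  - by move: Px; rewrite eP.
  - by move: Qy; rewrite eQ.
  move=> _ [t _ <-] Ut Vt.
  have : (P `&` Q) t by rewrite eP eQ.
  by rewrite PQ.
move=> h x y /eqP nxy.
have [|U [V [oU oV Ux Vy H]]] := h (e x) (e y) (ex_intro2 _ _ x I erefl) (ex_intro2 _ _ y I erefl).
  by move=> /ie.
exists (e @^-1` U, e @^-1` V) => /=.
  by rewrite !inE.
split.
- by apply/oe; exists U.
- by apply/oe; exists V.
apply/eqP/seteqP; split => // t [Ut Vt].
exact: (H (e t) (ex_intro2 _ _ t I erefl) Ut Vt).
Qed.

Lemma accessible_emb {T Z : topologicalType} (e : T -> Z) :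
  emb e -> (accessible_space T <-> sepT1 (range e)).
Proof.
move=> [ie oe]; split.
  move=> h _ _ [x _ <-] [y _ <-] nxy.
  have /h : x != y by apply/eqP => exy; apply: nxy; rewrite exy.
  move=> [P [/oe [U [oU eP]]]]; rewrite !inE eP => Ux Uy.
  by exists U.
move=> h x y /eqP nxy.
have [|U [oU Ux Uy]] := h (e x) (e y) (ex_intro2 _ _ x I erefl) (ex_intro2 _ _ y I erefl).
  by move=> /ie.
exists (e @^-1` U); split; rewrite ?inE //.
by apply/oe; exists U.
Qed.

Lemma pclosureE {T : topologicalType} (x y : T) :
  pclosure x y <-> forall U V : set T, open U -> open V -> U x -> V y ->
     exists z, U z /\ V z.
Proof.
split.
  move=> h U V oU oV Ux Vy.
  have /(_ V) := h U (conj oU Ux).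
  move=> /(_ (open_nbhs_nbhs (conj oV Vy))) [z [Uz Vz]]; by exists z.
move=> h U [oU Ux] B; rewrite nbhsE => -[V [oV Vy] VB].
have [z [Uz Vz]] := h U V oU oV Ux Vy.
by exists z; split => //; apply: VB.
Qed.

Lemma pcl_emb {T Z : topologicalType} (e : T -> Z) (x : T) :
  emb e -> e @` (pclosure x) = pcl (range e) (e x).
Proof.
move=> [ie oe]; apply/seteqP; split.
  move=> _ [y /pclosureE h <-]; split; first by exists y.
  move=> U V oU oV Ux Vy.
  have oU' : open (e @^-1` U) by apply/oe; exists U.
  have oV' : open (e @^-1` V) by apply/oe; exists V.
  have [z [Uz Vz]] := h (e @^-1` U) (e @^-1` V) oU' oV' Ux Vy.
  by exists (e z); split => //; exists z.
move=> _ [[y _ <-] h]; exists y => //; apply/pclosureE.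
move=> P Q /oe [U [oU ->]] /oe [V [oV ->]] Ux Vy.
have [_ [[z _ <-] Uz Vz]] := h U V oU oV Ux Vy.
by exists z.
Qed.

Lemma AH_of_ah {W : Type} (R : W -> W -> Prop) (Z : topologicalType) w (T : topologicalType) :
  alpha_hausdorff R w T -> forall e : T -> Z, emb e -> AH R w (range e).
Proof.
move: w T; fix IH 3 => w T H.
case: H => [w' T' h hT e he|w' T' ex aT Hx e he].
  apply: AH0 => //; exact/(hausdorff_emb he).
apply: AHS => //; first exact/(accessible_emb he).
move=> _ [x _ <-].
case: (Hx x) => v Rv Hv.
exists v => //.
rewrite -(pcl_emb x he) -range_sub.
exact: (IH _ _ Hv _ (emb_sub (pclosure x) he)).
Qed.

Lemma ah_of_AH {W : Type} (R : W -> W -> Prop) (Z : topologicalType) w (A : set Z) :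
  AH R w A -> forall (T : topologicalType) (e : T -> Z), emb e -> range e = A ->
  alpha_hausdorff R w T.
Proof.
move: w A; fix IH 3 => w A H.
case: H => [w' A' h hA T e he eA|w' A' ex hA Hx T e he eA].
  apply: ah_zero => //.
  by apply/(hausdorff_emb he); rewrite eA.
apply: ah_succ => //.
  by apply/(accessible_emb he); rewrite eA.
move=> x.
have Ax : A' (e x) by rewrite -eA; exists x.
case: (Hx (e x) Ax) => v Rv Hv.
exists v => //.
apply: (IH _ _ Hv _ _ (emb_sub (pclosure x) he)).
by rewrite range_sub pcl_emb // eA.
Qed.

Inductive Pt (W : Type) := Leaf of bool | Iso of W & nat | Deep of W & Pt W.
Arguments Leaf {W}.

HB.instance Definition _ W := gen_eqMixin (Pt W).
HB.instance Definition _ W := gen_choiceMixin (Pt W).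

Fixpoint Nb {W} (p : Pt W) (O : set (Pt W)) : Prop :=
  match p with
  | Leaf b => O (Leaf b)
  | Iso b n => O (Iso b n)
  | Deep b q => (exists k, forall n, (k <= n)%N -> O (Iso b n)) /\
                Nb q (fun r => O (Deep b r))
  end.

Definition Zopen {W} (O : set (Pt W)) := forall p, O p -> Nb p O.

Lemma Nb_mono {W} (p : Pt W) : forall (O O' : set (Pt W)),
  (forall z, O z -> O' z) -> Nb p O -> Nb p O'.
Proof.
elim: p => [b|b n|b q IH] O O' h /=; try exact: h.
move=> [[k hk] hq]; split; first by exists k => n /hk; apply: h.
by apply: (IH _ _ _ hq) => r; apply: h.
Qed.

Lemma Nb_T {W} (p : Pt W) : Nb p setT.
Proof.
elim: p => [b|b n|b q IH] //=; split; first by exists 0%N.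
exact: (Nb_mono _ IH).
Qed.

Lemma Nb_I {W} (p : Pt W) : forall (O O' : set (Pt W)),
  Nb p O -> Nb p O' -> Nb p (O `&` O').
Proof.
elim: p => [b|b n|b q IH] O O' /=; try by move=> ? ?; split.
move=> [[k hk] hq] [[k' hk'] hq']; split.
  exists (k + k')%N => n hn; split.
    by apply: hk; apply: leq_trans hn; apply: leq_addr.
  by apply: hk'; apply: leq_trans hn; apply: leq_addl.
exact: (IH _ _ hq hq').
Qed.

Lemma Nb_pt {W} (p : Pt W) : forall (O : set (Pt W)), Nb p O -> O p.
Proof.
elim: p => [b|b n|b q IH] O //= [_ hq].
exact: (IH _ hq).
Qed.

Lemma Nb_int {W} (p : Pt W) : forall (O : set (Pt W)), Nb p O -> Nb p (fun r => Nb r O).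
Proof.
elim: p => [b|b n|b q IH] O //= [[k hk] hq]; split.
  by exists k.
apply: (Nb_mono _ (IH _ hq)) => r hr /=; split => //; by exists k.
Qed.

Lemma Zopen_T {W} : @Zopen W setT.
Proof. by move=> p _; exact: Nb_T. Qed.

Lemma Zopen_I {W} : setI_closed (@Zopen W).
Proof.
move=> A B oA oB p [Ap Bp]; exact: Nb_I (oA _ Ap) (oB _ Bp).
Qed.

Lemma Zopen_U {W} (I : Type) (f : I -> set (Pt W)) :
  (forall i, Zopen (f i)) -> Zopen (\bigcup_i f i).
Proof.
move=> h p [i _ fip]; apply: (Nb_mono _ (h i p fip)) => z fz; by exists i.
Qed.

HB.instance Definition _ W := isOpenTopological.Build (Pt W) (@Zopen_T W) (@Zopen_I W) (@Zopen_U W).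

Lemma openZ {W} (O : set (Pt W)) : open O <-> Zopen O.
Proof. by []. Qed.

Unset Implicit Arguments.

Lemma Nb_neq {W} (p : Pt W) : forall y, p <> y -> Nb p (fun r => r <> y).
Proof.
elim: p => [b|b n|b q IH] y //= hy; split.
  exists (match y with Iso _ m => m.+1 | _ => 0%N end) => n hn.
  case: y hy hn => // c m _ hn [_ e]; subst m.
  by rewrite ltnn in hn.
case: y hy => [c|c m|c r] hy.
- by apply: (Nb_mono _ (Nb_T q)).
- by apply: (Nb_mono _ (Nb_T q)).
case: (pselect (q = r)) => [eqr|neqr].
  subst r; apply: (Nb_mono _ (Nb_T q)) => z _ [ec _]; subst c; exact: hy.
by apply: (Nb_mono _ (IH _ neqr)) => z hz [_ ez].
Qed.

Lemma open_neqZ {W} (y : Pt W) : open (fun r => r <> y).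
Proof. move=> p; exact: Nb_neq. Qed.

Lemma open_Leaf {W} (b : bool) : open [set (@Leaf W b)].
Proof. by move=> p ->. Qed.

Lemma open_Iso {W} (b : W) n : open [set Iso b n].
Proof. by move=> p ->. Qed.

Definition tagZ {W} (b : W) : set (Pt W) :=
  fun z => match z with Iso c _ => c = b | Deep c _ => c = b | _ => False end.

Lemma open_tag {W} (b : W) : open (tagZ b).
Proof.
move=> [c|c n|c q] //= ->; split; first by exists 0%N.
exact: (Nb_mono _ (Nb_T q)).
Qed.

Lemma emb_id {W} : emb (fun p : Pt W => p).
Proof.
split; first by move=> ? ?.
by move=> S; split; [move=> oS; exists S|move=> [P [oP ->]]].
Qed.

Lemma emb_deep {W} (b : W) : emb (@Deep W b).
Proof.
split; first by move=> ? ? [].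
move=> S; split.
  move=> oS.
  exists (fun z => match z with Deep c r => c = b /\ S r | Iso c _ => c = b | _ => False end).
  split; last by apply/seteqP; split => r /=; [move=> Sr|move=> [_]].
  move=> [c|c n|c r] //= [-> Sr]; split; first by exists 0%N.
  by apply: (Nb_mono _ (oS _ Sr)).
move=> [P [oP ->]]; apply/openZ => r /= Pr.
by have [_ h] := oP _ Pr.
Qed.

Lemma not_pcl_iso {W} (A : set (Pt W)) x y : open [set y] -> y <> x -> ~ pcl A x y.
Proof.
move=> oy yx [_ h].
have [z [_ zy zy']] := h _ _ (open_neqZ y) oy (nesym yx) erefl.
exact: zy zy'.
Qed.

Lemma pcl_iso {W} (A : set (Pt W)) x : A x -> open [set x] -> pcl A x = [set x].
Proof.
move=> Ax ox; apply/seteqP; split => y.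
  move=> [Ay h]; apply: contrapT => yx.
  have [z [_ zx zx']] := h _ _ ox (open_neqZ x) erefl yx.
  by apply: zx'.
move=> ->; split => // U V _ _ Ux Vx; by exists x.
Qed.

Fixpoint inA {W} (R : W -> W -> Prop) (p : Pt W) (a : W) : Prop :=
  match p with
  | Leaf _ => True
  | Iso b _ => R b a
  | Deep b q => R b a /\ inA R q b
  end.

Lemma pcl_deep {W} (R : W -> W -> Prop) (a b : W) (q : Pt W) :
  R b a -> inA R q b ->
  pcl (fun p => inA R p a) (Deep b q) = Deep b @` (fun p => inA R p b).
Proof.
move=> Rba qb; apply/seteqP; split => y.
  case: y => [c|c m|c r] hy.
  - by exfalso; apply: (not_pcl_iso _ _ _ (open_Leaf c) _ hy).
  - by exfalso; apply: (not_pcl_iso _ _ _ (open_Iso c m) _ hy).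
  case: (pselect (c = b)) => [ecb|necb].
    subst c; case: hy => [[_ hr] _]; by exists r.
  exfalso; case: hy => _ h.
  have [z [_ zb zc]] := h _ _ (open_tag b) (open_tag c) erefl erefl.
  move: zb zc; rewrite /tagZ; case: z => [d|d n|d s] //= -> e;
    by apply: necb; rewrite e.
move=> [r hr <-]; split; first by split.
move=> U V oU oV Ux Vy.
have [[k hk] _] := oU _ Ux.
have [[k' hk'] _] := oV _ Vy.
exists (Iso b (k + k')); split => //.
  by apply: hk; apply: leq_addr.
by apply: hk'; apply: leq_addl.
Qed.

Lemma AH_shift {W} (R : W -> W -> Prop) (b v : W) :
  AH R v (fun p : Pt W => inA R p b) <-> AH R v (Deep b @` (fun p => inA R p b)).
Proof.
set A := (fun p : Pt W => inA R p b).
have e1 := emb_sub A (@emb_id W).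
have e2 := emb_sub A (emb_deep b).
have r1 : range (fun a : set_type A => set_val a) = A.
  rewrite (range_sub (fun p : Pt W => p) A); exact: image_id.
have r2 := range_sub (Deep b) A.
split => h.
  have := AH_of_ah (ah_of_AH h e1 r1) e2; by rewrite r2.
have := AH_of_ah (ah_of_AH h e2 r2) e1; by rewrite r1.
Qed.

Lemma AH_inv {W} (R : W -> W -> Prop) (Z : topologicalType) w (A : set Z) :
  AH R w A -> ((forall v, ~ R v w) /\ sepH A) \/
   ((exists v, R v w) /\ sepT1 A /\ (forall x, A x -> exists2 v, R v w & AH R v (pcl A x))).
Proof. case => w' A'; [left|right]; by split. Qed.

Lemma wf_min {W} (R : W -> W -> Prop) : well_founded R -> forall a : W,
  exists m, forall v, ~ R v m.
Proof.
move=> wf a; apply: contrapT => hn.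
have H : forall m, exists v, R v m.
  move=> m; apply: contrapT => hm; apply: hn; exists m => v Rv; apply: hm; by exists v.
elim: (wf a) => x _ IH.
have [v Rv] := H x; exact: IH v Rv.
Qed.

Lemma AH_single {W} (R : W -> W -> Prop) (Z : topologicalType) (m : W) (x : Z) :
  (forall v, ~ R v m) -> AH R m [set x].
Proof. by move=> hm; apply: AH0 => // y z -> ->. Qed.

Lemma main {W} (R : W -> W -> Prop) : strict_well_order R -> forall a : W,
  AH R a (fun p : Pt W => inA R p a) /\
  forall v, R v a -> ~ AH R v (fun p : Pt W => inA R p a).
Proof.
move=> [wf [tr tri]] a.
elim: (wf a) => {}a _ IH.
case: (pselect (exists v, R v a)) => [[v0 Rv0]|nex]; last first.
  have hmin : forall v, ~ R v a by move=> v Rv; apply: nex; exists v.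
  split; last by move=> v /hmin.
  apply: AH0 => // x y.
  case: x => [b|b n|b q] /= hx; try by [case: (hmin _ hx)|case: hx => /hmin].
  case: y => [c|c n|c q] /= hy; try by [case: (hmin _ hy)|case: hy => /hmin].
  move=> nbc; exists [set Leaf b], [set Leaf c]; split.
  - exact (open_Leaf _).
  - exact (open_Leaf _).
  - by [].
  - by [].
  by move=> z _ -> [e]; apply: nbc; rewrite e.
split.
  apply: AHS; first by exists v0.
    move=> x y _ _ nxy; exists (fun r => r <> y); split; [exact (open_neqZ y)|exact: nxy|by []].
  have [m hm] := wf_min R wf a.
  have Rma : R m a.
    case: (tri m a) => [//|[ema|Ram]]; first by subst m; case: (hm _ Rv0).
    by case: (hm _ Ram).
  move=> [b|b n|b q] /= hx.
  - exists m => //; rewrite pcl_iso //; last exact (open_Leaf b).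
    exact: AH_single.
  - exists m => //; rewrite pcl_iso //; last exact (open_Iso b n).
    exact: AH_single.
  case: hx => Rba hq; exists b => //.
  rewrite pcl_deep //; apply/AH_shift.
  exact: (IH b Rba).1.
move=> v Rva Hv; case: (AH_inv _ _ _ _ Hv) => [[hv hs]|[_ [_ hx]]].
  have hx : inA R (Deep v0 (Leaf true)) a by [].
  have hy : inA R (Deep v0 (Leaf false)) a by [].
  have [|U [V [oU oV Ux Vy hUV]]] := hs _ _ hx hy; first by [].
  have : pcl (fun p => inA R p a) (Deep v0 (Leaf true)) (Deep v0 (Leaf false)).
    by rewrite pcl_deep //; exists (Leaf false).
  move=> [_ /(_ U V oU oV Ux Vy)] [z [Az Uz Vz]].
  exact: hUV z Az Uz Vz.
have hx' : inA R (Deep v (Leaf true)) a by [].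
have [u Ruv] := hx _ hx'.
rewrite pcl_deep // -AH_shift.
exact: (IH v Rva).2 u Ruv.
Qed.

Close Scope classical_set_scope.

Theorem theorem18 :
  forall (W : Type) (R : W -> W -> Prop), strict_well_order R ->
  forall alpha : W,
    exists X : topologicalType, peripherally_hausdorff X /\ rankT2_eq R X alpha.
Proof.
move=> W R wo a.
have [h1 h2] := main R wo a.
set A := (fun p : Pt W => inA R p a).
have e1 := emb_sub A (@emb_id W).
have r1 : range (fun x : set_type A => set_val x) = A.
  rewrite (range_sub (fun p : Pt W => p) A); exact: image_id.
have ah := ah_of_AH h1 e1 r1.
exists (set_type A); split.
  by exists W, R, a.
split => // v Rv hv.
apply: (h2 v Rv).
have := AH_of_ah hv e1; by rewrite r1.
Qed.
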